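(* Let $h>0$, $\Omega\in\mathbb{R}$, $g<0$. Consider the discrete Gross–Pitaevskii lattice $$i\dot{\phi}_n+\frac{1}{h^2}(\phi_{n+1}-2\phi_n+\phi_{n-1})-\Omega^2(hn)^2\phi_n-g|\phi_n|^2\phi_n=0,\quad n\in\mathbb{Z},$$ with vanishing boundary conditions $\lim_{|n|\to\infty}\phi_n(t)=0$ for all $t\ge0$. Let the initial datum $\phi(0)$ have finite discrete variance, $V_d(0):=h\sum_{n\in\mathbb{Z}}(hn)^2|\phi_n(0)|^2<\infty$, and let $\phi\in C^1([0,\infty),l^2)$ be the corresponding global-in-time solution. Then $$V_d(t):=h\sum_{n\in\mathbb{Z}}(hn)^2|\phi_n(t)|^2<\infty\quad\text{for all } t>0.$$
   Context: $l^2$ is the space of complex sequences $u=(u_n)_{n\in\mathbb{Z}}$ with $\|u\|_{l^2}^2=h\sum_{n}|u_n|^2<\infty$. *)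

(* Defs.v *)
From Stdlib Require Import Reals ZArith.
From Coquelicot Require Import Coquelicot.
Open Scope R_scope.

(* Sum over n in Z of a nonnegative family a, folded onto nat:
   term k = a(k) + a(-(k+1)), so k = 0,1,... enumerates Z exactly once. *)
Definition zfold (a : Z -> R) (k : nat) : R :=
  a (Z.of_nat k) + a (- (Z.of_nat k + 1))%Z.

(* u ∈ l^2 : h * sum_n |u_n|^2 < oo (h > 0, so h is irrelevant for finiteness). *)
Definition in_l2 (u : Z -> C) : Prop :=
  ex_series (zfold (fun n => Cmod (u n) ^ 2)).

Definition l2norm (h : R) (u : Z -> C) : R :=
  sqrt (h * Series (zfold (fun n => Cmod (u n) ^ 2))).

Definition finite_variance (h : R) (u : Z -> C) : Prop :=
  ex_series (zfold (fun n => (h * IZR n) ^ 2 * Cmod (u n) ^ 2)).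

(* phi ∈ C^1([0,oo), l^2) with derivative dphi : phi(t), dphi(t) ∈ l^2 for t>=0,
   the difference quotient converges to dphi(t) in l^2 (one-sided at t = 0),
   and dphi is continuous [0,oo) -> l^2. *)
Definition C1_l2 (h : R) (phi dphi : R -> Z -> C) : Prop :=
  (forall t, 0 <= t -> in_l2 (phi t) /\ in_l2 (dphi t)) /\
  (forall t, 0 <= t ->
     filterlim
       (fun s => l2norm h (fun n => ((phi (t + s)%R n - phi t n) / RtoC s - dphi t n)%C))
       (within (fun s => s <> 0 /\ 0 <= t + s) (locally 0))
       (locally 0)) /\
  (forall t, 0 <= t ->
     filterlim (fun s => l2norm h (fun n => (dphi s n - dphi t n)%C))
       (within (fun s => 0 <= s) (locally t))
       (locally 0)).

Definition dGP_eq (h Omega g : R) (phi dphi : R -> Z -> C) (t : R) (n : Z) : Prop :=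
  (Ci * dphi t n
   + RtoC (/ h ^ 2) * (phi t (n + 1)%Z - RtoC 2 * phi t n + phi t (n - 1)%Z)
   - RtoC (Omega ^ 2 * (h * IZR n) ^ 2) * phi t n
   - RtoC (g * Cmod (phi t n) ^ 2) * phi t n)%C = 0%C.

Definition vanishing_bc (phi : R -> Z -> C) (t : R) : Prop :=
  forall eps : R, 0 < eps -> exists N : nat,
    forall n : Z, (Z.of_nat N <= Z.abs n)%Z -> Cmod (phi t n) < eps.

(* Main.v *)
Require Import Defs.
From Stdlib Require Import Reals ZArith Lra Lia Classical IndefiniteDescription.
From Coquelicot Require Import Coquelicot.
Open Scope R_scope.
Open Scope Z_scope.
Definition wZ (N n : Z) : Z := Z.min (n*n) (Z.max 0 (N*N+N - Z.abs n)).
Lemma wZ_in N n : 0 <= N -> Z.abs n <= N -> wZ N n = n*n.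
Proof. intros. unfold wZ. assert (n*n = Z.abs n * Z.abs n) by (destruct (Z.abs_spec n); nia). nia. Qed.
Lemma wZ_out N n : 0 <= N -> N <= Z.abs n -> wZ N n = Z.max 0 (N*N+N - Z.abs n).
Proof. intros. unfold wZ. assert (n*n = Z.abs n * Z.abs n) by (destruct (Z.abs_spec n); nia). nia. Qed.
Lemma sq_small d x : (d = 0 \/ d = -1 \/ d = 1) -> 0 <= x -> d*d <= 8*x+2.
Proof. intros [->|[->| ->]]; lia. Qed.
Lemma W5 N n : 0 <= N -> (wZ N (n+1) - wZ N n)*(wZ N (n+1) - wZ N n) <= 8 * wZ N n + 2.
Proof. intros.
destruct (Z.le_gt_cases 0 n); destruct (Z.le_gt_cases N n).
- rewrite (wZ_out N n), (wZ_out N (n+1)) by lia. rewrite !Z.abs_eq by lia. apply sq_small; lia.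
- rewrite (wZ_in N n), (wZ_in N (n+1)) by lia. nia.
- lia.
- destruct (Z.le_gt_cases (-N) n).
  + rewrite (wZ_in N n), (wZ_in N (n+1)) by lia. nia.
  + destruct (Z.eq_dec (n+1) (-N)).
    * rewrite (wZ_out N n), (wZ_in N (n+1)) by lia. rewrite Z.abs_neq by lia.
      replace n with (-N-1) by lia. replace (-N-1+1) with (-N) by lia.
      replace (-N * -N) with (N*N) by ring.
      assert (N = 0 \/ 1 <= N*N) as [->|HN] by nia; [simpl; lia|].
      set (Q := N*N) in *. apply sq_small; lia.
    * rewrite (wZ_out N n), (wZ_out N (n+1)) by lia. rewrite !Z.abs_neq by lia. apply sq_small; lia.
Qed.
Lemma W1 N n : 0 <= N -> 0 <= wZ N n.
Proof. intros. unfold wZ. nia. Qed.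
Lemma W4 N n : 0 <= N -> N*N+N <= Z.abs n -> wZ N n = 0.
Proof. intros. unfold wZ. nia. Qed.
Close Scope Z_scope.

Definition zsum (f : Z -> R) (J : nat) : R := sum_f_R0 (zfold f) J.

Lemma zsum_S f J : zsum f (S J) = zsum f J + f (Z.of_nat (S J)) + f (- (Z.of_nat (S J) + 1))%Z.
Proof. transitivity (zsum f J + zfold f (S J)); [reflexivity| unfold zfold; ring]. Qed.

Lemma zsum_0 f : zsum f 0 = f 0%Z + f (-1)%Z.
Proof. reflexivity. Qed.

Lemma zsum_ext f g J : (forall n, f n = g n) -> zsum f J = zsum g J.
Proof. intros H. induction J. rewrite !zsum_0, !H; auto. rewrite !zsum_S, IHJ, !H; auto. Qed.

Lemma zsum_lin a b f g J : zsum (fun n => a * f n + b * g n) J = a * zsum f J + b * zsum g J.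
Proof. induction J. rewrite !zsum_0; ring. rewrite !zsum_S, IHJ; ring. Qed.

Lemma zsum_le f g J : (forall n, f n <= g n) -> zsum f J <= zsum g J.
Proof. intros H. induction J. rewrite !zsum_0. pose proof (H 0%Z); pose proof (H (-1)%Z); lra.
 rewrite !zsum_S. pose proof (H (Z.of_nat (S J))); pose proof (H (- (Z.of_nat (S J) + 1))%Z); lra. Qed.

Lemma zsum_nonneg f J : (forall n, 0 <= f n) -> 0 <= zsum f J.
Proof. intros H. induction J. rewrite !zsum_0. pose proof (H 0%Z); pose proof (H (-1)%Z); lra.
 rewrite !zsum_S. pose proof (H (Z.of_nat (S J))); pose proof (H (- (Z.of_nat (S J) + 1))%Z); lra. Qed.

Lemma zsum_mono f J J' : (forall n, 0 <= f n) -> (J <= J')%nat -> zsum f J <= zsum f J'.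
Proof. intros H HJ. induction HJ. lra. rewrite zsum_S.
 pose proof (H (Z.of_nat (S m))); pose proof (H (- (Z.of_nat (S m) + 1))%Z); lra. Qed.

Lemma zsum_term f n J : (forall n, 0 <= f n) -> (- Z.of_nat J - 1 <= n <= Z.of_nat J)%Z -> f n <= zsum f J.
Proof. intros H. induction J; intros Hn.
 - rewrite zsum_0. simpl in Hn. assert (n = 0 \/ n = -1)%Z as [-> | ->] by lia.
   pose proof (H (-1)%Z); lra. pose proof (H 0%Z); lra.
 - rewrite zsum_S. pose proof (zsum_nonneg f J H).
   pose proof (H (Z.of_nat (S J))); pose proof (H (- (Z.of_nat (S J) + 1))%Z).
   destruct (Z.le_gt_cases n (Z.of_nat J)); destruct (Z.le_gt_cases (- Z.of_nat J - 1) n).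
   + specialize (IHJ ltac:(lia)). lra.
   + assert (n = - (Z.of_nat (S J) + 1))%Z as -> by lia. lra.
   + assert (n = Z.of_nat (S J))%Z as -> by lia. lra.
   + lia.
Qed.

Lemma zsum_shift c J : zsum (fun n => c (n-1)%Z) J = zsum c J + c (- Z.of_nat J - 2)%Z - c (Z.of_nat J).
Proof. induction J.
 - rewrite !zsum_0. simpl. ring.
 - rewrite !zsum_S, IHJ.
   replace (Z.of_nat (S J) - 1)%Z with (Z.of_nat J) by lia.
   replace (- (Z.of_nat (S J) + 1) - 1)%Z with (- Z.of_nat (S J) - 2)%Z by lia.
   replace (- Z.of_nat J - 2)%Z with (- (Z.of_nat (S J) + 1))%Z by lia. ring.
Qed.

Lemma partial_le_series a : (forall n, 0 <= a n) -> ex_series a -> forall N, sum_f_R0 a N <= Series a.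
Proof. intros H E N. rewrite <- sum_n_Reals.
 apply (is_lim_seq_incr_compare (sum_n a) (Series a)).
 - apply Series_correct in E. exact E.
 - intros n. rewrite sum_Sn. unfold plus; simpl. specialize (H (S n)). lra.
Qed.

Lemma series_bounded a B : (forall n, 0 <= a n) -> (forall N, sum_f_R0 a N <= B) -> ex_series a.
Proof. intros H HB. destruct (ex_finite_lim_seq_incr (sum_n a) B) as [l Hl].
 - intros n. rewrite sum_Sn. unfold plus; simpl. specialize (H (S n)). lra.
 - intros n. rewrite sum_n_Reals. auto.
 - exists l. exact Hl.
Qed.

Lemma zfold_nonneg f : (forall n, 0 <= f n) -> forall k, 0 <= zfold f k.
Proof. intros H k. unfold zfold. pose proof (H (Z.of_nat k)); pose proof (H (- (Z.of_nat k + 1))%Z). lra. Qed.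

Lemma zsum_le_series f J : (forall n, 0 <= f n) -> ex_series (zfold f) -> zsum f J <= Series (zfold f).
Proof. intros H E. apply partial_le_series; auto. apply zfold_nonneg; auto. Qed.

Lemma term_le_series f n : (forall n, 0 <= f n) -> ex_series (zfold f) -> f n <= Series (zfold f).
Proof. intros H E. eapply Rle_trans; [apply (zsum_term f n (Z.to_nat (Z.abs n))); auto; lia|].
 apply zsum_le_series; auto. Qed.
Definition rr (z : C) : R := fst z ^ 2 + snd z ^ 2.

Lemma rr_nonneg z : 0 <= rr z.
Proof. unfold rr. nra. Qed.

Lemma Cmod_sq z : Cmod z ^ 2 = rr z.
Proof. unfold Cmod, rr. rewrite pow2_sqrt; auto. nra. Qed.

Lemma Cinv_RtoC s : Cinv (RtoC s) = RtoC (/ s).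
Proof. unfold Cinv, RtoC; simpl. destruct (Req_dec s 0) as [->|Hs].
 - rewrite Rinv_0. f_equal; unfold Rdiv; try rewrite Ropp_0; rewrite Rmult_0_l; reflexivity.
 - f_equal; field; auto.
Qed.

Lemma fst_divR a s : fst (a / RtoC s)%C = fst a * / s.
Proof. unfold Cdiv. rewrite Cinv_RtoC. unfold Cmult, RtoC; simpl. ring. Qed.
Lemma snd_divR a s : snd (a / RtoC s)%C = snd a * / s.
Proof. unfold Cdiv. rewrite Cinv_RtoC. unfold Cmult, RtoC; simpl. ring. Qed.
Lemma fst_minus a b : fst (a - b)%C = fst a - fst b.
Proof. unfold Cminus, Cplus, Copp; simpl. ring. Qed.
Lemma snd_minus a b : snd (a - b)%C = snd a - snd b.
Proof. unfold Cminus, Cplus, Copp; simpl. ring. Qed.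

Lemma ex_series_le_R (a b : nat -> R) : (forall n, 0 <= a n <= b n) -> ex_series b -> ex_series a.
Proof. intros H E. apply (ex_series_le a b); auto. intros n. change (norm (a n)) with (Rabs (a n)).
 rewrite Rabs_pos_eq; apply H. Qed.

Lemma ex_series_lin (a b : nat -> R) x y : ex_series a -> ex_series b -> ex_series (fun n => x * a n + y * b n).
Proof. intros Ea Eb. apply (ex_series_ext (fun n => plus (scal x (a n)) (scal y (b n)))).
 intros n. reflexivity. apply (@ex_series_plus R_AbsRing R_NormedModule); apply (@ex_series_scal R_AbsRing R_NormedModule); auto. Qed.

Lemma in_l2_rr u : in_l2 u <-> ex_series (zfold (fun n => rr (u n))).
Proof. unfold in_l2. split; apply ex_series_ext; intros k; unfold zfold; rewrite !Cmod_sq; auto. Qed.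

Lemma sqd a b u v : (a*u - b*v)^2 <= 2*u^2*a^2 + 2*v^2*b^2.
Proof. pose proof (pow2_ge_0 (a*u+b*v)). nra. Qed.

Lemma in_l2_comb (a b : Z -> C) (x y : R) :
  in_l2 a -> in_l2 b -> in_l2 (fun n => (a n / RtoC x - b n / RtoC y)%C).
Proof. rewrite !in_l2_rr. intros Ea Eb.
 apply ex_series_le_R with (b := fun k => (2 * (/x)^2) * zfold (fun n => rr (a n)) k + (2 * (/y)^2) * zfold (fun n => rr (b n)) k).
 2: apply ex_series_lin; auto.
 intros k. split. apply zfold_nonneg. intros; apply rr_nonneg.
 unfold zfold, rr. rewrite !fst_minus, !snd_minus, !fst_divR, !snd_divR.
 set (u := /x); set (v := /y).
 set (a1 := a (Z.of_nat k)); set (a2 := a (- (Z.of_nat k + 1))%Z).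
 set (b1 := b (Z.of_nat k)); set (b2 := b (- (Z.of_nat k + 1))%Z).
 pose proof (sqd (fst a1) (fst b1) u v); pose proof (sqd (snd a1) (snd b1) u v);
 pose proof (sqd (fst a2) (fst b2) u v); pose proof (sqd (snd a2) (snd b2) u v).
 lra.
Qed.
Lemma in_l2_ext u v : in_l2 u -> (forall n, u n = v n) -> in_l2 v.
Proof. unfold in_l2. intros E H. eapply ex_series_ext; [|exact E]. intros k. unfold zfold. rewrite !H. auto. Qed.

Lemma divR1 a : (a / RtoC 1)%C = a.
Proof. destruct a as [a1 a2]. apply injective_projections.
 rewrite fst_divR. simpl. rewrite Rinv_1; ring. rewrite snd_divR. simpl. rewrite Rinv_1; ring. Qed.

Lemma in_l2_minus a b : in_l2 a -> in_l2 b -> in_l2 (fun n => (a n - b n)%C).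
Proof. intros Ea Eb. eapply in_l2_ext. apply (in_l2_comb a b 1 1); auto. intros n. simpl. rewrite !divR1. auto. Qed.

Definition dq (phi dphi : R -> Z -> C) (t s : R) (n : Z) := ((phi (t+s)%R n - phi t n) / RtoC s - dphi t n)%C.

Lemma dq_l2 h phi dphi t s : C1_l2 h phi dphi -> 0 <= t -> 0 <= t + s -> in_l2 (dq phi dphi t s).
Proof. intros [H1 _] Ht Hts. unfold dq. eapply in_l2_ext.
 apply (in_l2_comb (fun n => (phi (t+s)%R n - phi t n)%C) (dphi t) s 1).
 apply in_l2_minus; [apply (H1 _ Hts) | apply (H1 _ Ht)]. apply (H1 _ Ht).
 intros n; simpl. rewrite divR1. auto. Qed.

Lemma Series_zfold_nonneg f : (forall n, 0 <= f n) -> ex_series (zfold f) -> 0 <= Series (zfold f).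
Proof. intros H E. eapply Rle_trans; [|apply (zsum_le_series f 0); auto]. apply zsum_nonneg; auto. Qed.

Lemma dq_small h phi dphi : 0 < h -> C1_l2 h phi dphi -> forall t, 0 <= t -> forall eps, 0 < eps ->
  exists d, 0 < d /\ forall s, s <> 0 -> 0 <= t + s -> Rabs s < d ->
    Series (zfold (fun n => rr (dq phi dphi t s n))) < eps.
Proof. intros Hh HC t Ht eps He. pose proof HC as [_ [H2 _]]. specialize (H2 t Ht).
 rewrite filterlim_locally in H2.
 assert (Hp : 0 < sqrt (h * eps)) by (apply sqrt_lt_R0; nra).
 specialize (H2 (mkposreal _ Hp)). destruct H2 as [d Hd].
 exists d. split. apply cond_pos. intros s Hs0 Hts Hsd.
 unfold ball in Hd; simpl in Hd. unfold AbsRing_ball in Hd. unfold abs, minus, plus, opp in Hd; simpl in Hd.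
 specialize (Hd s). specialize (Hd ltac:(rewrite Ropp_0, Rplus_0_r; exact Hsd) (conj Hs0 Hts)).
 rewrite Ropp_0, Rplus_0_r in Hd. unfold l2norm in Hd. rewrite Rabs_pos_eq in Hd by apply sqrt_pos.
 apply sqrt_lt_0_alt in Hd.
 assert (E : Series (zfold (fun n => Cmod ((phi (t + s)%R n - phi t n) / RtoC s - dphi t n)%C ^ 2))
          = Series (zfold (fun n => rr (dq phi dphi t s n)))).
 { apply Series_ext. intros k. unfold zfold, dq. rewrite !Cmod_sq. auto. }
 rewrite E in Hd. nra.
Qed.

Lemma abs_lt_sq x e : x ^ 2 < e ^ 2 -> 0 < e -> Rabs x < e.
Proof. intros H He. rewrite <- pow2_abs in H. pose proof (Rabs_pos x). nra. Qed.

Lemma dq_comp_small h phi dphi : 0 < h -> C1_l2 h phi dphi -> forall t, 0 <= t -> forall eps, 0 < eps ->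
  exists d, 0 < d /\ forall s, s <> 0 -> 0 <= t + s -> Rabs s < d -> forall n,
    Rabs ((fst (phi (t+s) n) - fst (phi t n)) * / s - fst (dphi t n)) < eps /\
    Rabs ((snd (phi (t+s) n) - snd (phi t n)) * / s - snd (dphi t n)) < eps.
Proof. intros Hh HC t Ht eps He. destruct (dq_small h phi dphi Hh HC t Ht (eps^2)) as [d [Hd Hs]]. nra.
 exists d. split; auto. intros s Hs0 Hts Hsd n. specialize (Hs s Hs0 Hts Hsd).
 assert (L := dq_l2 h phi dphi t s HC Ht Hts). rewrite in_l2_rr in L.
 pose proof (term_le_series (fun n => rr (dq phi dphi t s n)) n (fun _ => rr_nonneg _) L) as T.
 simpl in T. set (S := Series _) in T, Hs. unfold dq, rr in T. rewrite !fst_minus, !snd_minus, !fst_divR, !snd_divR, !fst_minus, !snd_minus in T.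
 split; apply abs_lt_sq; auto; pose proof (pow2_ge_0 ((fst (phi (t+s) n) - fst (phi t n)) * / s - fst (dphi t n)));
 pose proof (pow2_ge_0 ((snd (phi (t+s) n) - snd (phi t n)) * / s - snd (dphi t n))); lra.
Qed.
Lemma zsum_zero J : zsum (fun _ => 0) J = 0.
Proof. induction J. rewrite zsum_0; ring. rewrite zsum_S, IHJ; ring. Qed.

Lemma rr_tri a b : rr a <= 2 * rr b + 2 * rr (a - b)%C.
Proof. unfold rr. rewrite fst_minus, snd_minus.
 pose proof (pow2_ge_0 (2*fst b - fst a)); pose proof (pow2_ge_0 (2*snd b - snd a)). nra. Qed.

Lemma rr_sym a b : rr (a - b)%C = rr (b - a)%C.
Proof. unfold rr. rewrite !fst_minus, !snd_minus. ring. Qed.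

Lemma rr_scale_bound a b c s : s <> 0 ->
  rr (a - b)%C <= 2 * s^2 * rr ((a - b) / RtoC s - c)%C + 2 * s^2 * rr c.
Proof. intros Hs. unfold rr. rewrite !fst_minus, !snd_minus, !fst_divR, !snd_divR, !fst_minus, !snd_minus.
 set (p1 := fst a - fst b); set (p2 := snd a - snd b); set (c1 := fst c); set (c2 := snd c).
 set (u1 := p1 * / s - c1); set (u2 := p2 * / s - c2).
 assert (E1 : p1 = s * (u1 + c1)) by (unfold u1; field; auto).
 assert (E2 : p2 = s * (u2 + c2)) by (unfold u2; field; auto).
 rewrite E1, E2.
 pose proof (pow2_ge_0 (u1 - c1)); pose proof (pow2_ge_0 (u2 - c2)); pose proof (pow2_ge_0 s).
 assert (s^2 * (u1+c1)^2 <= s^2 * (2*u1^2 + 2*c1^2)) by (apply Rmult_le_compat_l; nra).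
 assert (s^2 * (u2+c2)^2 <= s^2 * (2*u2^2 + 2*c2^2)) by (apply Rmult_le_compat_l; nra).
 nra.
Qed.

Lemma local_diff h phi dphi : 0 < h -> C1_l2 h phi dphi -> forall t0, 0 <= t0 ->
  exists d, 0 < d /\ forall t, 0 <= t -> Rabs (t - t0) < d -> forall J,
    zsum (fun n => rr (phi t n - phi t0 n)%C) J <= 1.
Proof. intros Hh HC t0 Ht0. pose proof HC as [H1 _].
 assert (Ld := proj2 (H1 t0 Ht0)). rewrite in_l2_rr in Ld.
 set (K := Series (zfold (fun n => rr (dphi t0 n)))).
 assert (HK : 0 <= K) by (apply Series_zfold_nonneg; auto; intros; apply rr_nonneg).
 destruct (dq_small h phi dphi Hh HC t0 Ht0 1 Rlt_0_1) as [d1 [Hd1 Hs]].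
 assert (Hq : 0 < / (3 + 2*K)) by (apply Rinv_0_lt_compat; lra).
 exists (Rmin d1 (/ (3 + 2*K))). split. apply Rmin_pos; auto.
 intros t Ht Htd J. destruct (Req_dec (t - t0) 0) as [E|E].
 - replace t with t0 by lra. apply Rle_trans with 0; [|lra]. rewrite <- (zsum_zero J). apply zsum_le. intros n. unfold rr.
   rewrite fst_minus, snd_minus. right. ring_simplify. reflexivity.
 - set (s := t - t0) in *. replace t with (t0 + s) by (unfold s; ring).
   assert (Hts : 0 <= t0 + s) by (unfold s; lra).
   assert (Hsd1 : Rabs s < d1) by (eapply Rlt_le_trans; [exact Htd| apply Rmin_l]).
   assert (Hsq : Rabs s < / (3 + 2*K)) by (eapply Rlt_le_trans; [exact Htd| apply Rmin_r]).
   specialize (Hs s E Hts Hsd1).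
   assert (Lq := dq_l2 h phi dphi t0 s HC Ht0 Hts). rewrite in_l2_rr in Lq.
   apply Rle_trans with (zsum (fun n => (2 * s^2) * rr (dq phi dphi t0 s n) + (2 * s^2) * rr (dphi t0 n)) J).
   + apply zsum_le. intros n. unfold dq. apply rr_scale_bound; auto.
   + rewrite zsum_lin.
     pose proof (zsum_le_series _ J (fun _ => rr_nonneg _) Lq) as HA.
     pose proof (zsum_le_series _ J (fun _ => rr_nonneg _) Ld) as HB. fold K in HB.
     pose proof (zsum_nonneg _ J (fun n => rr_nonneg (dq phi dphi t0 s n))).
     pose proof (zsum_nonneg _ J (fun n => rr_nonneg (dphi t0 n))).
     pose proof (pow2_ge_0 s).
     set (A := zsum (fun n => rr (dq phi dphi t0 s n)) J) in *.
     set (B := zsum (fun n => rr (dphi t0 n)) J) in *.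
     set (q := / (3 + 2*K)) in *.
     assert (Hq1 : q * (3 + 2*K) = 1) by (unfold q; field; lra).
     assert (s^2 <= q^2) by (rewrite <- (pow2_abs s); pose proof (Rabs_pos s); nra).
     assert (2*s^2*A + 2*s^2*B <= s^2 * (2 + 2*K)) by nra.
     nra.
Qed.
Definition Ut (phi : R -> Z -> C) t J := zsum (fun n => rr (phi t n)) J.

Lemma Ut_tri phi t t0 J : Ut phi t J <= 2 * Ut phi t0 J + 2 * zsum (fun n => rr (phi t n - phi t0 n)%C) J.
Proof. unfold Ut. rewrite <- zsum_lin. apply zsum_le. intros n. apply rr_tri. Qed.

Lemma Ut_tri' phi t t0 J : Ut phi t0 J <= 2 * Ut phi t J + 2 * zsum (fun n => rr (phi t n - phi t0 n)%C) J.
Proof. unfold Ut. rewrite <- zsum_lin. apply zsum_le. intros n. rewrite rr_sym. apply rr_tri. Qed.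

Fixpoint Aseq (a : R) (k : nat) : R := match k with O => a | S k => 4 * Aseq a k + 6 end.

Lemma Aseq_nonneg a k : 0 <= a -> 0 <= Aseq a k.
Proof. intros Ha. induction k; simpl; lra. Qed.

Lemma IZR_le_INR z : IZR z <= INR (Z.to_nat z).
Proof. rewrite INR_IZR_INZ. apply IZR_le. lia. Qed.

Lemma unif_bound h phi dphi T : 0 < h -> C1_l2 h phi dphi -> 0 <= T ->
  exists B, 0 <= B /\ forall t, 0 <= t <= T -> forall J, Ut phi t J <= B.
Proof. intros Hh HC HT.
 assert (Hloc : forall t0, exists d, 0 < d /\ (0 <= t0 -> forall t, 0 <= t -> Rabs (t - t0) < d -> forall J,
    zsum (fun n => rr (phi t n - phi t0 n)%C) J <= 1)).
 { intros t0. destruct (Rle_lt_dec 0 t0) as [H0|H0].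
   - destruct (local_diff h phi dphi Hh HC t0 H0) as [d [Hd Hd2]]. exists d. split; auto.
   - exists 1. split. lra. intros; lra. }
 set (df := fun t0 => proj1_sig (constructive_indefinite_description _ (Hloc t0))).
 assert (Hdf : forall t0, 0 < df t0 /\ (0 <= t0 -> forall t, 0 <= t -> Rabs (t - t0) < df t0 -> forall J,
    zsum (fun n => rr (phi t n - phi t0 n)%C) J <= 1)).
 { intros t0. unfold df. apply (proj2_sig (constructive_indefinite_description _ (Hloc t0))). }
 assert (Hpos : forall t0, 0 < df t0 / 2) by (intros t0; pose proof (proj1 (Hdf t0)); lra).
 destruct (compactness_value_1d 0 T (fun t0 => mkposreal _ (Hpos t0))) as [d Hd].
 simpl in Hd.
 pose proof HC as [H1 _].
 assert (L0 := proj1 (H1 0 (Rle_refl 0))). rewrite in_l2_rr in L0.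
 set (N0 := Series (zfold (fun n => rr (phi 0 n)))).
 assert (HN0 : 0 <= N0) by (apply Series_zfold_nonneg; auto; intros; apply rr_nonneg).
 assert (Hk : forall k x, 0 <= x <= T -> x <= INR k * d -> forall J, Ut phi x J <= Aseq N0 k).
 { induction k; intros x Hx Hxk J.
   - simpl in Hxk. replace x with 0 by (simpl in *; lra). apply zsum_le_series; auto. intros; apply rr_nonneg.
   - destruct (Rle_lt_dec x (INR k * d)) as [Hle|Hlt].
     + simpl. pose proof (IHk x Hx Hle J). pose proof (Aseq_nonneg N0 k HN0). lra.
     + set (x' := INR k * d) in *.
       assert (Hx'0 : 0 <= x') by (unfold x'; pose proof (pos_INR k); pose proof (cond_pos d); nra).
       assert (Hx' : 0 <= x' <= T) by lra.
       specialize (IHk x' Hx' (Rle_refl _) J).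
       rewrite S_INR in Hxk.
       apply Classical_Prop.NNPP. intros Hn. apply (Hd x Hx). intros [t [Ht [Hxt Hdt]]]. apply Hn.
       destruct (Hdf t) as [Hdt0 Hdt1].
       specialize (Hdt1 (proj1 Ht)).
       assert (A1 := Hdt1 x (proj1 Hx) ltac:(lra) J).
       assert (A2 : Rabs (x' - t) < df t).
       { apply Rabs_def1; apply Rabs_def2 in Hxt; unfold x' in *; lra. }
       assert (A3 := Hdt1 x' Hx'0 A2 J).
       pose proof (Ut_tri phi x t J). pose proof (Ut_tri' phi x' t J).
       simpl. lra. }
 assert (Hd0 : 0 < d) by apply cond_pos.
 destruct (archimed (T / d)) as [Hup _].
 set (k := Z.to_nat (up (T / d))).
 assert (HkT : T <= INR k * d).
 { pose proof (IZR_le_INR (up (T / d))). fold k in H.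
   assert (T / d * d = T) by (field; lra). nra. }
 exists (Aseq N0 k). split. apply Aseq_nonneg; auto.
 intros t Ht J. apply Hk; auto. lra.
Qed.
Definition Xe (pr : C -> R) (phi dphi : R -> Z -> C) (t : R) (n : Z) : R :=
  if Rle_dec 0 t then pr (phi t n) else pr (phi 0 n) + t * pr (dphi 0 n).

Lemma Xe_pos pr phi dphi t n : 0 <= t -> Xe pr phi dphi t n = pr (phi t n).
Proof. intros Ht. unfold Xe. destruct (Rle_dec 0 t); [auto| contradiction]. Qed.

Lemma Xe_deriv pr h phi dphi t n : (pr = fst \/ pr = snd) -> 0 < h -> C1_l2 h phi dphi -> 0 <= t ->
  is_derive (fun s => Xe pr phi dphi s n) t (pr (dphi t n)).
Proof. intros Hpr Hh HC Ht. apply is_derive_Reals. intros eps Heps.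
 destruct (dq_comp_small h phi dphi Hh HC t Ht eps Heps) as [d [Hd Hs]].
 assert (key : forall hh, hh <> 0 -> 0 <= t + hh -> Rabs hh < d ->
   Rabs ((pr (phi (t+hh) n) - pr (phi t n)) / hh - pr (dphi t n)) < eps).
 { intros hh H1 H2 H3. destruct Hpr; subst pr; apply (Hs hh H1 H2 H3 n). }
 destruct (Rle_lt_or_eq_dec 0 t Ht) as [Htp | Ht0].
 - assert (Hm : 0 < Rmin d t) by (apply Rmin_pos; auto).
   exists (mkposreal _ Hm). intros hh Hh0 Hhh. simpl in Hhh.
   assert (Hhd : Rabs hh < d) by (eapply Rlt_le_trans; [exact Hhh| apply Rmin_l]).
   assert (Hht : Rabs hh < t) by (eapply Rlt_le_trans; [exact Hhh| apply Rmin_r]).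
   assert (Hth : 0 <= t + hh) by (apply Rabs_def2 in Hht; lra).
   rewrite !Xe_pos by auto. apply key; auto.
 - subst t. exists (mkposreal _ Hd). intros hh Hh0 Hhh. simpl in Hhh.
   destruct (Rle_dec 0 (0 + hh)) as [A|A].
   + rewrite !Xe_pos by (auto; lra). apply key; auto.
   + unfold Xe. destruct (Rle_dec 0 (0 + hh)); [contradiction|]. destruct (Rle_dec 0 0); [|lra].
     replace ((pr (phi 0 n) + (0 + hh) * pr (dphi 0 n) - pr (phi 0 n)) / hh - pr (dphi 0 n)) with 0 by (field; auto).
     rewrite Rabs_R0; auto.
Qed.

Lemma is_derive_eq (f : R -> R) x d d' : is_derive f x d -> d = d' -> is_derive f x d'.
Proof. intros H ->; auto. Qed.

Lemma zsum_deriv (F : R -> Z -> R) (dF : Z -> R) t J :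
  (forall n, is_derive (fun s => F s n) t (dF n)) ->
  is_derive (fun s => zsum (F s) J) t (zsum dF J).
Proof. intros H. induction J.
 - apply (is_derive_ext (fun s => F s 0%Z + F s (-1)%Z)). intros s. rewrite zsum_0. reflexivity. rewrite zsum_0.
   apply (is_derive_plus (fun s => F s 0%Z) (fun s => F s (-1)%Z)); auto.
 - apply (is_derive_ext (fun s => zsum (F s) J + F s (Z.of_nat (S J)) + F s (- (Z.of_nat (S J) + 1))%Z)).
   intros s. rewrite zsum_S. reflexivity. rewrite zsum_S.
   apply (is_derive_plus (fun s => zsum (F s) J + F s (Z.of_nat (S J))) (fun s => F s (- (Z.of_nat (S J) + 1))%Z)); auto.
   apply (is_derive_plus (fun s => zsum (F s) J) (fun s => F s (Z.of_nat (S J)))); auto.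
Qed.

Lemma term_deriv (X Y : R -> R) w t dx dy : is_derive X t dx -> is_derive Y t dy ->
  is_derive (fun s => w * (X s ^ 2 + Y s ^ 2)) t (w * (2 * X t * dx + 2 * Y t * dy)).
Proof. intros HX HY. apply is_derive_scal.
 eapply is_derive_eq. apply (is_derive_plus (fun s => X s ^ 2) (fun s => Y s ^ 2)); apply is_derive_pow; eauto.
 unfold plus; simpl. ring.
Qed.
Definition bb (phi : R -> Z -> C) t n := fst (phi t n) * snd (phi t (n+1)%Z) - snd (phi t n) * fst (phi t (n+1)%Z).

Lemma eq_energy h Omega g phi dphi t n : 0 < h -> dGP_eq h Omega g phi dphi t n ->
  fst (phi t n) * fst (dphi t n) + snd (phi t n) * snd (dphi t n) = / h^2 * (bb phi t (n-1) - bb phi t n).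
Proof. intros Hh H. unfold bb. rewrite Z.sub_add.
 unfold dGP_eq in H. pose proof (f_equal fst H) as H1. pose proof (f_equal snd H) as H2.
 simpl in H1, H2.
 set (x := fst (phi t n)) in *. set (y := snd (phi t n)) in *.
 set (xd := fst (dphi t n)) in *. set (yd := snd (dphi t n)) in *.
 set (xp := fst (phi t (n+1)%Z)) in *. set (yp := snd (phi t (n+1)%Z)) in *.
 set (xm := fst (phi t (n-1)%Z)) in *. set (ym := snd (phi t (n-1)%Z)) in *.
 set (c := / h^2) in *. set (V1 := Omega ^ 2 * (h * IZR n) ^ 2) in *. set (V2 := g * Cmod (phi t n) ^ 2) in *.
 replace (/ (h * (h * 1))) with c in H1, H2 by (unfold c; f_equal; ring).
 replace (Omega * (Omega * 1) * (h * IZR n * (h * IZR n * 1))) with V1 in H1, H2 by (unfold V1; ring).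
 replace (g * (Cmod (phi t n) * (Cmod (phi t n) * 1))) with V2 in H1, H2 by (unfold V2; ring).
 assert (Exd : xd = - (c * (yp - 2 * y + ym)) + V1 * y + V2 * y) by lra.
 assert (Eyd : yd = c * (xp - 2 * x + xm) - V1 * x - V2 * x) by lra.
 rewrite Exd, Eyd. ring.
Qed.
Definition wR (N : nat) (n : Z) : R := IZR (wZ (Z.of_nat N) n).
Definition JJ (N : nat) : nat := Z.to_nat (Z.of_nat N * Z.of_nat N + Z.of_nat N).
Definition Wf phi dphi N t := zsum (fun n => wR N n * (Xe fst phi dphi t n ^ 2 + Xe snd phi dphi t n ^ 2)) (JJ N).
Definition dW phi dphi N t := zsum (fun n => wR N n * (2 * Xe fst phi dphi t n * fst (dphi t n)
   + 2 * Xe snd phi dphi t n * snd (dphi t n))) (JJ N).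

Lemma Wf_deriv h phi dphi N t : 0 < h -> C1_l2 h phi dphi -> 0 <= t -> is_derive (Wf phi dphi N) t (dW phi dphi N t).
Proof. intros Hh HC Ht. unfold Wf, dW.
 apply (zsum_deriv (fun s n => wR N n * (Xe fst phi dphi s n ^ 2 + Xe snd phi dphi s n ^ 2))).
 intros n. apply term_deriv; apply (Xe_deriv _ h); auto. Qed.

Lemma wR_nonneg N n : 0 <= wR N n.
Proof. unfold wR. apply IZR_le. apply W1. lia. Qed.

Lemma wR_zero N n : (Z.of_nat (JJ N) <= Z.abs n)%Z -> wR N n = 0.
Proof. intros H. unfold wR, JJ in *. rewrite W4. auto. lia. rewrite Z2Nat.id in H; lia. Qed.

Lemma wR_diff N n : (wR N (n+1) - wR N n)^2 <= 8 * wR N n + 2.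
Proof. unfold wR. rewrite <- minus_IZR. simpl. rewrite Rmult_1_r, <- mult_IZR.
 replace 8 with (IZR 8) by reflexivity. replace 2 with (IZR 2) by reflexivity.
 rewrite <- mult_IZR, <- plus_IZR. apply IZR_le. apply W5. lia. Qed.

Lemma wR_in N n : (Z.abs n <= Z.of_nat N)%Z -> wR N n = IZR n ^ 2.
Proof. intros H. unfold wR. rewrite wZ_in by lia. rewrite mult_IZR. ring. Qed.

Lemma wR_le N n : wR N n <= IZR n ^ 2.
Proof. unfold wR, wZ. replace (IZR n ^ 2) with (IZR (n*n)) by (rewrite mult_IZR; ring).
 apply IZR_le. lia. Qed.

Lemma term_ineq D w x y x' y' : D^2 <= 8 * w + 2 -> 0 <= w ->
  D * (x * y' - y * x') <= (w + 1/4) * (x^2 + y^2) + 2 * (x'^2 + y'^2).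
Proof. intros HD Hw.
 pose proof (pow2_ge_0 (D*x - 4*y')); pose proof (pow2_ge_0 (D*y + 4*x')).
 assert (D^2 * x^2 <= (8*w+2) * x^2) by (apply Rmult_le_compat_r; nra).
 assert (D^2 * y^2 <= (8*w+2) * y^2) by (apply Rmult_le_compat_r; nra).
 nra. Qed.

Lemma zsum_lin3 a b c f g k J : zsum (fun n => a * f n + b * g n + c * k n) J = a * zsum f J + b * zsum g J + c * zsum k J.
Proof. induction J. rewrite !zsum_0; ring. rewrite !zsum_S, IHJ; ring. Qed.

Lemma dW_bound h Omega g phi dphi N t B : 0 < h -> (forall n, dGP_eq h Omega g phi dphi t n) -> 0 <= t ->
  (forall J, Ut phi t J <= B) -> dW phi dphi N t <= (2 / h^2) * (Wf phi dphi N t + 3 * B).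
Proof. intros Hh Heq Ht HB. set (J := JJ N).
 assert (Hh2 : 0 < / h^2) by (apply Rinv_0_lt_compat; nra).
 assert (E1 : dW phi dphi N t = (2 * / h^2) * zsum (fun n => wR N n * bb phi t (n-1)) J
                 + (- (2 * / h^2)) * zsum (fun n => wR N n * bb phi t n) J).
 { unfold dW. rewrite <- zsum_lin. apply zsum_ext. intros n. rewrite !Xe_pos by auto.
   replace (2 * fst (phi t n) * fst (dphi t n) + 2 * snd (phi t n) * snd (dphi t n))
     with (2 * (fst (phi t n) * fst (dphi t n) + snd (phi t n) * snd (dphi t n))) by ring.
   rewrite (eq_energy h Omega g phi dphi t n Hh (Heq n)). ring. }
 set (c := fun n => wR N (n+1)%Z * bb phi t n).
 assert (E2 : zsum (fun n => wR N n * bb phi t (n-1)) J = zsum c J).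
 { rewrite (zsum_ext _ (fun n => c (n-1)%Z)). rewrite zsum_shift.
   unfold c. rewrite (wR_zero N (- Z.of_nat J - 2 + 1)), (wR_zero N (Z.of_nat J + 1)) by (unfold J; lia). ring.
   intros n. unfold c. rewrite Z.sub_add. auto. }
 rewrite E2 in E1.
 set (r := fun n => rr (phi t n)).
 assert (E3 : dW phi dphi N t <= (2 * / h^2) * (1 * zsum (fun n => wR N n * r n) J + (1/4) * zsum r J
               + 2 * zsum (fun n => r (n+1)%Z) J)).
 { rewrite E1. rewrite <- zsum_lin3.
   replace (2 * / h ^ 2 * zsum c J + - (2 * / h ^ 2) * zsum (fun n : Z => wR N n * bb phi t n) J)
     with (2 * / h^2 * (1 * zsum c J + (-1) * zsum (fun n : Z => wR N n * bb phi t n) J)) by ring.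
   rewrite <- zsum_lin. apply Rmult_le_compat_l; [lra|]. apply zsum_le. intros n. unfold c, r, rr, bb.
   replace (1 * (wR N (n + 1) * (fst (phi t n) * snd (phi t (n + 1)%Z) - snd (phi t n) * fst (phi t (n + 1)%Z))) +
     -1 * (wR N n * (fst (phi t n) * snd (phi t (n + 1)%Z) - snd (phi t n) * fst (phi t (n + 1)%Z))))
     with ((wR N (n + 1) - wR N n) * (fst (phi t n) * snd (phi t (n + 1)%Z) - snd (phi t n) * fst (phi t (n + 1)%Z))) by ring.
   eapply Rle_trans. apply term_ineq. apply wR_diff. apply wR_nonneg. right. ring. }
 assert (E4 : zsum (fun n => wR N n * r n) J = Wf phi dphi N t).
 { unfold Wf. apply zsum_ext. intros n. rewrite !Xe_pos by auto. reflexivity. }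
 assert (E5 : zsum (fun n => r (n+1)%Z) J <= B).
 { assert (S5 := zsum_shift (fun n => r (n+1)%Z) J).
   rewrite (zsum_ext (fun n => r (n - 1 + 1)%Z) r) in S5 by (intros; rewrite Z.sub_add; auto).
   pose proof (HB (S J)). unfold Ut in H. fold r in H. rewrite zsum_S in H.
   replace (- Z.of_nat J - 2 + 1)%Z with (- (Z.of_nat (S J) + 1) + 1)%Z in S5 by lia.
   replace (Z.of_nat J + 1)%Z with (Z.of_nat (S J)) in S5 by lia.
   pose proof (rr_nonneg (phi t (- Z.of_nat J - 2 + 1 - 1)%Z)).
   assert (r (- (Z.of_nat (S J) + 1) + 1)%Z >= 0) by (unfold r; pose proof (rr_nonneg (phi t (- (Z.of_nat (S J) + 1) + 1)%Z)); lra).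
   assert (r (- (Z.of_nat (S J) + 1))%Z >= 0) by (unfold r; pose proof (rr_nonneg (phi t (- (Z.of_nat (S J) + 1))%Z)); lra).
   lra. }
 assert (E6 : zsum r J <= B) by apply HB.
 assert (E7 : 0 <= zsum r J) by (apply zsum_nonneg; intros; apply rr_nonneg).
 rewrite E4 in E3. unfold Rdiv.
 assert (0 <= B) by lra.
 assert (2 * / h^2 * (1 * Wf phi dphi N t + 1 / 4 * zsum r J + 2 * zsum (fun n : Z => r (n + 1)%Z) J)
         <= 2 * / h^2 * (Wf phi dphi N t + 3 * B)) by (apply Rmult_le_compat_l; lra).
 lra.
Qed.
Lemma zsum_ext_range f g J : (forall n, (- Z.of_nat J - 1 <= n <= Z.of_nat J)%Z -> f n = g n) -> zsum f J = zsum g J.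
Proof. induction J; intros H.
 - rewrite !zsum_0. rewrite !H by (simpl; lia). auto.
 - rewrite !zsum_S. rewrite IHJ by (intros; apply H; lia). rewrite !H by lia. auto. Qed.

Lemma G_decr h Omega g phi dphi N T B V0 : 0 < h -> C1_l2 h phi dphi ->
  (forall t n, 0 <= t -> dGP_eq h Omega g phi dphi t n) -> 0 < T ->
  (forall t, 0 <= t <= T -> forall J, Ut phi t J <= B) ->
  Wf phi dphi N 0 <= V0 ->
  Wf phi dphi N T <= exp ((2 / h^2) * T) * (V0 + 3 * B).
Proof. intros Hh HC Heq HT HB HV.
 set (Cc := 2 / h^2).
 set (G := fun s => exp (- Cc * s) * (Wf phi dphi N s + 3 * B)).
 set (dG := fun s => - Cc * exp (- Cc * s) * (Wf phi dphi N s + 3 * B) + exp (- Cc * s) * dW phi dphi N s).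
 assert (HG : forall s, 0 <= s -> is_derive G s (dG s)).
 { intros s Hs. unfold G, dG. eapply is_derive_eq.
   apply (is_derive_mult (fun s => exp (- Cc * s)) (fun s => Wf phi dphi N s + 3 * B)).
   - eapply is_derive_eq. apply (is_derive_comp exp (fun s => - Cc * s)). apply is_derive_exp.
     eapply is_derive_eq. apply is_derive_scal. apply is_derive_id. unfold one; simpl. reflexivity.
     reflexivity.
   - eapply is_derive_eq. apply (is_derive_plus (Wf phi dphi N) (fun _ => 3 * B)).
     apply (Wf_deriv h); auto. apply is_derive_const. reflexivity.
   - intros; apply Rmult_comm.
   - unfold plus, mult, scal, zero; simpl. unfold mult; simpl. ring. }
 assert (HdG : forall s, 0 <= s <= T -> dG s <= 0).
 { intros s Hs. unfold dG.
   assert (Hd := dW_bound h Omega g phi dphi N s B Hh (fun n => Heq s n (proj1 Hs)) (proj1 Hs) (HB s Hs)).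
   pose proof (exp_pos (- Cc * s)). fold Cc in Hd.
   assert (exp (- Cc * s) * dW phi dphi N s <= exp (- Cc * s) * (Cc * (Wf phi dphi N s + 3 * B))) by (apply Rmult_le_compat_l; lra).
   nra. }
 destruct (MVT_gen G 0 T dG) as [c [Hc Hm]].
 - intros x Hx. rewrite Rmin_left, Rmax_right in Hx by lra. apply HG; lra.
 - intros x Hx. rewrite Rmin_left, Rmax_right in Hx by lra. apply continuity_pt_filterlim.
   apply (ex_derive_continuous G). exists (dG x). apply HG; lra.
 - rewrite Rmin_left, Rmax_right in Hc by lra.
   assert (dG c * (T - 0) <= 0) by (pose proof (HdG c Hc); nra).
   assert (HG0 : G 0 = Wf phi dphi N 0 + 3 * B) by (unfold G; rewrite Rmult_0_r, exp_0; ring).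
   assert (HGT : G T <= V0 + 3 * B) by lra.
   unfold G in HGT.
   assert (Ee : exp (Cc * T) * exp (- Cc * T) = 1) by (rewrite <- exp_plus; replace (Cc * T + - Cc * T) with 0 by ring; apply exp_0).
   pose proof (exp_pos (Cc * T)).
   assert (exp (Cc * T) * (exp (- Cc * T) * (Wf phi dphi N T + 3 * B)) <= exp (Cc * T) * (V0 + 3 * B)) by (apply Rmult_le_compat_l; lra).
   assert (0 <= B) by (pose proof (HB 0 ltac:(lra) 0%nat); unfold Ut in H2; pose proof (zsum_nonneg (fun n => rr (phi 0 n)) 0 (fun _ => rr_nonneg _)); lra).
   rewrite <- Rmult_assoc, Ee, Rmult_1_l in H1. lra.
Qed.

Theorem mainTheorem3 (h Omega g : R) (phi dphi : R -> Z -> C) :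
  0 < h -> g < 0 ->
  C1_l2 h phi dphi ->
  (forall t n, 0 <= t -> dGP_eq h Omega g phi dphi t n) ->
  (forall t, 0 <= t -> vanishing_bc phi t) ->
  finite_variance h (phi 0) ->
  forall t, 0 < t -> finite_variance h (phi t).
Proof. intros Hh Hg HC Heq Hbc HV0 T HT.
 destruct (unif_bound h phi dphi T Hh HC (Rlt_le _ _ HT)) as [B [HB0 HB]].
 set (f0 := fun n => IZR n ^ 2 * rr (phi 0 n)).
 assert (Hf0 : forall n, 0 <= f0 n) by (intros; unfold f0; pose proof (rr_nonneg (phi 0 n)); pose proof (pow2_ge_0 (IZR n)); nra).
 assert (E0 : ex_series (zfold f0)).
 { unfold finite_variance in HV0.
   apply (ex_series_ext (fun k => / h^2 * zfold (fun n => (h * IZR n) ^ 2 * Cmod (phi 0 n) ^ 2) k + 0 * zfold (fun n => (h * IZR n) ^ 2 * Cmod (phi 0 n) ^ 2) k)).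
   - intros k. unfold zfold, f0. rewrite !Cmod_sq. match goal with |- ?a = ?b => change (@eq R a b) end.
     rewrite !Rpow_mult_distr. field. lra.
   - apply ex_series_lin; auto. }
 set (V0 := Series (zfold f0)).
 set (E := exp ((2 / h^2) * T) * (V0 + 3 * B)).
 assert (HW : forall N, Wf phi dphi N T <= E).
 { intros N. apply (G_decr h Omega g phi dphi N T B V0); auto.
   unfold Wf. eapply Rle_trans; [|apply (zsum_le_series f0 (JJ N) Hf0 E0)].
   apply zsum_le. intros n. rewrite !Xe_pos by lra. unfold f0, rr.
   pose proof (wR_le N n). pose proof (wR_nonneg N n).
   pose proof (pow2_ge_0 (fst (phi 0 n))); pose proof (pow2_ge_0 (snd (phi 0 n))).
   apply Rmult_le_compat_r; lra. }
 unfold finite_variance.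
 apply (series_bounded _ (h^2 * E)).
 - apply zfold_nonneg. intros n. pose proof (pow2_ge_0 (h * IZR n)); pose proof (pow2_ge_0 (Cmod (phi T n))). nra.
 - intros K. change (sum_f_R0 (zfold ?f) K) with (zsum f K).
   assert (E1 : zsum (fun n => (h * IZR n) ^ 2 * Cmod (phi T n) ^ 2) K
     = h^2 * zsum (fun n => wR (S K) n * rr (phi T n)) K + 0 * zsum (fun n => wR (S K) n * rr (phi T n)) K).
   { rewrite <- zsum_lin. apply zsum_ext_range. intros n Hn. rewrite wR_in by lia. rewrite Cmod_sq. ring. }
   rewrite E1.
   assert (E2 : zsum (fun n => wR (S K) n * rr (phi T n)) K <= Wf phi dphi (S K) T).
   { unfold Wf. rewrite (zsum_ext (fun n => wR (S K) n * (Xe fst phi dphi T n ^ 2 + Xe snd phi dphi T n ^ 2))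
        (fun n => wR (S K) n * rr (phi T n))).
     apply zsum_mono. intros n. pose proof (wR_nonneg (S K) n); pose proof (rr_nonneg (phi T n)); nra.
     unfold JJ. rewrite Nat2Z.inj_succ. lia.
     intros n. rewrite !Xe_pos by lra. reflexivity. }
   pose proof (HW (S K)). pose proof (pow2_ge_0 h). nra.
Qed.
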